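(* Let $\mathcal A\subseteq E^\infty$, let $V,W\subseteq E$ be block subspaces with $W\subseteq^*V$, let $\vec v$ be a finite block sequence and let $T$ be a $(V,\vec v)$-rule. If player I has a strategy in $B^T_V(\vec v)$ to play in $\mathcal A$, then player I has a strategy in $B^T_W(\vec v)$ to play in $\mathcal A$.
   Context: Fix a countable field $\mathfrak F$ and let $E$ be the countable-dimensional $\mathfrak F$-vector space with basis $(e_n)$. For non-zero $x=\sum a_ne_n$, ${\rm supp}\,x=\{n:a_n\neq0\}$. A block sequence is a sequence of non-zero vectors with $\max{\rm supp}\,x_n<\min{\rm supp}\,x_{n+1}$. ''Subspace'' means an infinite-dimensional block subspace of $E$. For a subspace $X$, $X[k]=\{x\in X\setminus\{0\}:k<\min{\rm supp}\,x\}$; $W\subseteq^*V$ means $W[n]\subseteq V$ for some $n$. $E^\infty=E^{\mathbb N}$ with the product of discrete topologies; $E^{<\infty}$ is the set of finite block sequences; $\hat{}$ is concatenation; $T_{\vec x}=\{\vec y:\vec x\,\hat{}\,\vec y\in T\}$. Game $B_V(\vec v)$: if $|\vec v|$ is even: II plays a subspace $Z_0\subseteq V$; I plays non-zero $x_0\in Z_0$ and $n_0\in\mathbb N$; II plays non-zero $y_0\in V[n_0]$ and a subspace $Z_1\subseteq V$; I plays $x_1\in Z_1$, $n_1$; II plays $y_1\in V[n_1]$, $Z_2$; etc.; outcome $\vec v\,\hat{}\,(x_0,y_0,x_1,y_1,\dots)$. If $|\vec v|$ is odd: I plays $n_0$; II plays $y_0\in V[n_0]$ and $Z_0\subseteq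 V$; I plays $x_0\in Z_0$ and $n_1$; II plays $y_1\in V[n_1]$ and $Z_1$; etc.; outcome $\vec v\,\hat{}\,(y_0,x_0,y_1,x_1,\dots)$. A $(V,\vec v)$-rule is a set $T\subseteq E^{<\infty}$ with $\vec v\in T$ such that: (i) if $\vec y\in T$, $|\vec y|$ odd, then for every subspace $Z\subseteq V$ there is $z\in Z$ with $\vec y\,\hat{}\,z\in T$; (ii) if $\vec y\in T$, $|\vec y|$ even, then there is $n$ with $\vec y\,\hat{}\,z\in T$ for all $z\in V[n]$. The $T$-induced subgame $B^T_V(\vec v)$ is played as $B_V(\vec v)$ with the additional requirement that every position, i.e. the finite sequence of vectors played so far listed in the order they appear in the outcome, belongs to $T_{\vec v}$ (a player violating this loses). A strategy to play in $\mathcal A$ is one all of whose outcomes lie in $\mathcal A$. *)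

(* Defs.v *)
From HB Require Import structures.
From mathcomp Require Import all_boot all_order all_algebra.
Set Implicit Arguments. Unset Strict Implicit. Unset Printing Implicit Defensive.
Import GRing.Theory.
Local Open Scope ring_scope.

Record vec (F : countFieldType) := Vec {
  coef : nat -> F;
  coef_fin : exists N : nat, forall n : nat, (N <= n)%N -> coef n = 0 }.

Lemma vec0_fin (F : countFieldType) :
  exists N : nat, forall n : nat, (N <= n)%N -> (fun _ : nat => (0 : F)) n = 0.
Proof. by exists 0%N. Qed.

Definition vec0 (F : countFieldType) : vec F := Vec (vec0_fin F).

Definition nonzero F (x : vec F) : Prop := exists i : nat, coef x i != 0.

Definition before F (x y : vec F) : Prop :=
  forall i j : nat, coef x i != 0 -> coef y j != 0 -> (i < j)%N.

Definition block_seq F (z : nat -> vec F) : Prop :=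
  forall k : nat, nonzero (z k) /\ before (z k) (z k.+1).

Definition fin_block_seq F (s : seq (vec F)) : Prop :=
  forall i : nat, (i < size s)%N ->
    nonzero (nth (vec0 F) s i) /\
    ((i.+1 < size s)%N -> before (nth (vec0 F) s i) (nth (vec0 F) s i.+1)).

Definition in_span F (z : nat -> vec F) (x : vec F) : Prop :=
  exists (n : nat) (c : nat -> F),
    forall i : nat, coef x i = \sum_(k < n) c k * coef (z k) i.

Definition is_block_subspace F (X : vec F -> Prop) : Prop :=
  exists z : nat -> vec F, block_seq z /\ forall x, X x <-> in_span z x.

Definition subset F (X Y : vec F -> Prop) : Prop := forall x, X x -> Y x.

Definition tail F (X : vec F -> Prop) (k : nat) (x : vec F) : Prop :=
  X x /\ nonzero x /\ forall i : nat, coef x i != 0 -> (k < i)%N.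

Definition almost_sub F (W V : vec F -> Prop) : Prop :=
  exists n : nat, subset (tail W n) V.

Definition is_rule F (V : vec F -> Prop) (v : seq (vec F))
    (T : seq (vec F) -> Prop) : Prop :=
  (forall s, T s -> fin_block_seq s) /\ T v /\
  (forall y, T y -> odd (size y) ->
     forall Z, is_block_subspace Z -> subset Z V ->
       exists z, Z z /\ T (rcons y z)) /\
  (forall y, T y -> ~~ odd (size y) ->
     exists n : nat, forall z, tail V n z -> T (rcons y z)).

Definition cat_inf F (v : seq (vec F)) (out : nat -> vec F) : nat -> vec F :=
  fun i => if (i < size v)%N then nth (vec0 F) v i else out (i - size v)%N.

Definition Z_ok F (V : vec F -> Prop) (Z : vec F -> Prop) : Prop :=
  is_block_subspace Z /\ subset Z V.

(* ---------- Game B_V(v), |v| even ----------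
   II plays Z_k; I plays (x_k, n_k); II plays y_k (together with Z_{k+1}).
   A strategy of I maps the history [(Z_0,y_0);...;(Z_{k-1},y_{k-1})] and
   the current Z_k to I's move (x_k, n_k). *)
Definition ev_strategy F :=
  seq ((vec F -> Prop) * vec F) -> (vec F -> Prop) -> vec F * nat.

Definition ev_Imove F (s : ev_strategy F) (Zs : nat -> vec F -> Prop)
    (ys : nat -> vec F) (k : nat) : vec F * nat :=
  s (mkseq (fun j => (Zs j, ys j)) k) (Zs k).

Definition ev_out F (s : ev_strategy F) Zs ys : nat -> vec F :=
  fun i => if odd i then ys i./2 else (ev_Imove s Zs ys i./2).1.

Definition ev_I_ok F (T : seq (vec F) -> Prop) (v : seq (vec F))
    (s : ev_strategy F) Zs ys (k : nat) : Prop :=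
  let x := (ev_Imove s Zs ys k).1 in
  Zs k x /\ nonzero x /\ T (v ++ mkseq (ev_out s Zs ys) (k.*2.+1)).

Definition ev_IIy_ok F (V : vec F -> Prop) (T : seq (vec F) -> Prop)
    (v : seq (vec F)) (s : ev_strategy F) Zs ys (k : nat) : Prop :=
  tail V (ev_Imove s Zs ys k).2 (ys k) /\
  T (v ++ mkseq (ev_out s Zs ys) (k.*2.+2)).

Definition ev_wins F (V : vec F -> Prop) (T : seq (vec F) -> Prop)
    (v : seq (vec F)) (A : (nat -> vec F) -> Prop) (s : ev_strategy F) : Prop :=
  forall (Zs : nat -> vec F -> Prop) (ys : nat -> vec F),
    (forall k : nat,
       (forall j : nat, (j < k)%N -> Z_ok V (Zs j) /\ ev_IIy_ok V T v s Zs ys j) ->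
       Z_ok V (Zs k) -> ev_I_ok T v s Zs ys k) /\
    ((forall k : nat, Z_ok V (Zs k) /\ ev_IIy_ok V T v s Zs ys k) ->
       A (cat_inf v (ev_out s Zs ys))).

(* ---------- Game B_V(v), |v| odd ----------
   I plays n_0; II plays (y_k, Z_k); I plays (x_k, n_{k+1}).
   A strategy of I is n_0 together with a map from the history
   [(y_0,Z_0);...;(y_{k-1},Z_{k-1})] and the current (y_k,Z_k) to (x_k,n_{k+1}). *)
Definition od_strategy F :=
  (nat * (seq (vec F * (vec F -> Prop)) -> vec F * (vec F -> Prop) -> vec F * nat))%type.

Definition od_Imove F (s : od_strategy F) (ys : nat -> vec F)
    (Zs : nat -> vec F -> Prop) (k : nat) : vec F * nat :=
  s.2 (mkseq (fun j => (ys j, Zs j)) k) (ys k, Zs k).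

Definition od_n F (s : od_strategy F) ys Zs (k : nat) : nat :=
  if k is k'.+1 then (od_Imove s ys Zs k').2 else s.1.

Definition od_out F (s : od_strategy F) ys Zs : nat -> vec F :=
  fun i => if odd i then (od_Imove s ys Zs i./2).1 else ys i./2.

Definition od_II_ok F (V : vec F -> Prop) (T : seq (vec F) -> Prop)
    (v : seq (vec F)) (s : od_strategy F) ys Zs (k : nat) : Prop :=
  tail V (od_n s ys Zs k) (ys k) /\
  T (v ++ mkseq (od_out s ys Zs) (k.*2.+1)) /\ Z_ok V (Zs k).

Definition od_I_ok F (T : seq (vec F) -> Prop) (v : seq (vec F))
    (s : od_strategy F) ys Zs (k : nat) : Prop :=
  let x := (od_Imove s ys Zs k).1 in
  Zs k x /\ nonzero x /\ T (v ++ mkseq (od_out s ys Zs) (k.*2.+2)).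

Definition od_wins F (V : vec F -> Prop) (T : seq (vec F) -> Prop)
    (v : seq (vec F)) (A : (nat -> vec F) -> Prop) (s : od_strategy F) : Prop :=
  forall (ys : nat -> vec F) (Zs : nat -> vec F -> Prop),
    (forall k : nat, (forall j : nat, (j <= k)%N -> od_II_ok V T v s ys Zs j) ->
       od_I_ok T v s ys Zs k) /\
    ((forall k : nat, od_II_ok V T v s ys Zs k) ->
       A (cat_inf v (od_out s ys Zs))).

Definition I_has_strategy F (V : vec F -> Prop) (T : seq (vec F) -> Prop)
    (v : seq (vec F)) (A : (nat -> vec F) -> Prop) : Prop :=
  if odd (size v) then exists s : od_strategy F, od_wins V T v A s
  else exists s : ev_strategy F, ev_wins V T v A s.

(* Main.v *)
Require Import Defs.
From mathcomp Require Import all_boot all_order all_algebra.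
From mathcomp Require Import zify.
From Stdlib Require Import ClassicalEpsilon Classical FunctionalExtensionality.
Import GRing.Theory.
Local Open Scope ring_scope.

Lemma block_ge {F : countFieldType} (z : nat -> vec F) :
  block_seq z -> forall k i, coef (z k) i != 0 -> (k <= i)%N.
Proof.
move=> Hz; elim=> [//|k IH] i Hi.
have [[j Hj] Hb] := Hz k.
have := Hb _ _ Hj Hi. have := IH _ Hj. lia.
Qed.

Lemma block_shift {F : countFieldType} (z : nat -> vec F) m :
  block_seq z -> block_seq (fun k => z (k + m)%N).
Proof. move=> Hz k; rewrite addSn; exact: Hz. Qed.

Lemma span_shift {F : countFieldType} (z : nat -> vec F) m x :
  in_span (fun k => z (k + m)%N) x -> in_span z x.
Proof.
move=> [n [c Hc]].
exists (m + n)%N, (fun k => if (m <= k)%N then c (k - m)%N else 0) => i.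
rewrite Hc big_split_ord /= [X in _ = X + _]big1 ?add0r; last by move=> k _; rewrite leqNgt ltn_ord mul0r.
by apply: eq_bigr => k _; rewrite leq_addr addKn addnC.
Qed.

Lemma span_shift_supp {F : countFieldType} (z : nat -> vec F) m x i :
  block_seq z -> in_span (fun k => z (k + m)%N) x -> coef x i != 0 -> (m <= i)%N.
Proof.
move=> Hz [n [c Hc]]; rewrite Hc; apply: contraNT; rewrite -ltnNge => Hi.
apply/eqP; apply: big1 => k _.
have -> : coef (z (k + m)%N) i = 0; last by rewrite mulr0.
apply/eqP; apply: contraTT Hi => /(@block_ge _ _ Hz); rewrite -leqNgt; lia.
Qed.

Definition shrink {F : countFieldType} (m : nat) (Z : vec F -> Prop) : vec F -> Prop :=
  match excluded_middle_informative (is_block_subspace Z) with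
  | left H => in_span (fun k => sval (constructive_indefinite_description _ H) (k + m)%N)
  | right _ => Z end.

Lemma shrink_ok {F : countFieldType} {V W Z : vec F -> Prop} {n0} :
  is_block_subspace V -> Defs.subset (Defs.tail W n0) V -> is_block_subspace Z -> Defs.subset Z W ->
  Z_ok V (shrink n0.+1 Z) /\ Defs.subset (shrink n0.+1 Z) Z.
Proof.
move=> [zV [_ HV]] HWV HZb HZW; rewrite /shrink.
case: excluded_middle_informative => // H.
case: constructive_indefinite_description => z [Hz HZ] /=.
split; [split|].
- by exists (fun k => z (k + n0.+1)%N); split; [exact: block_shift|].
- move=> x Hx. case: (classic (nonzero x)) => Hn.
  + apply: HWV; split; first by apply: HZW; apply/HZ; exact: span_shift Hx.
    split=> // i Hi; exact: span_shift_supp Hz Hx Hi.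
  + apply/HV; exists 0%N, (fun _ => 0) => i; rewrite big_ord0.
    case E: (coef x i == 0); first exact/eqP.
    by exfalso; apply: Hn; exists i; rewrite E.
- by move=> x Hx; apply/HZ; exact: span_shift Hx.
Qed.

Lemma tail_max {F : countFieldType} {V W : vec F -> Prop} {n0 a y} :
  Defs.subset (Defs.tail W n0) V -> Defs.tail W (maxn a n0) y -> Defs.tail V a y.
Proof.
move=> HWV [Wy [nz sup]]; split; last split=> // i Hi; last first.
  by have := sup i Hi; rewrite gtn_max => /andP[].
apply: HWV; split=> //; split=> // i Hi.
by have := sup i Hi; rewrite gtn_max => /andP[].
Qed.

Lemma zok_conv {F : countFieldType} {V W Z : vec F -> Prop} {n0} :
  is_block_subspace V -> Defs.subset (Defs.tail W n0) V -> Z_ok W Z -> Z_ok V (shrink n0.+1 Z).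
Proof. by move=> HV HWV [HZ HZW]; have [] := shrink_ok HV HWV HZ HZW. Qed.

Lemma zsub_conv {F : countFieldType} {V W Z : vec F -> Prop} {n0 x} :
  is_block_subspace V -> Defs.subset (Defs.tail W n0) V -> Z_ok W Z -> shrink n0.+1 Z x -> Z x.
Proof. by move=> HV HWV [HZ HZW]; have [_] := shrink_ok HV HWV HZ HZW; apply. Qed.

Lemma even_case {F : countFieldType} (A : (nat -> vec F) -> Prop)
    (V W : vec F -> Prop) (v : seq (vec F)) (T : seq (vec F) -> Prop) n0 :
  is_block_subspace V -> Defs.subset (Defs.tail W n0) V ->
  (exists s, ev_wins V T v A s) -> exists s, ev_wins W T v A s.
Proof.
move=> HV HWV [s Hs].
pose sh := @shrink F n0.+1.
exists (fun hist Z => let p := s (map (fun q => (sh q.1, q.2)) hist) (sh Z) in (p.1, maxn p.2 n0)).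
move=> Zs ys.
set s' := (fun hist Z => _).
pose Zs' := fun j => sh (Zs j).
have Key : forall k, ev_Imove s' Zs ys k =
   ((ev_Imove s Zs' ys k).1, maxn (ev_Imove s Zs' ys k).2 n0).
  by move=> k; rewrite /ev_Imove /s' /mkseq -map_comp.
have Hout : ev_out s' Zs ys = ev_out s Zs' ys.
  by apply: functional_extensionality => i; rewrite /ev_out Key.
have conv : forall j, Z_ok W (Zs j) /\ ev_IIy_ok W T v s' Zs ys j ->
    Z_ok V (Zs' j) /\ ev_IIy_ok V T v s Zs' ys j.
  move=> j [HZ [Ht HT]]; split; first exact: zok_conv HV HWV HZ.
  rewrite Key /= in Ht; split; first exact: tail_max HWV Ht.
  by rewrite -Hout.
have [H1 H2] := Hs Zs' ys.
split.
- move=> k Hj Hk.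
  have := H1 k (fun j hj => conv j (Hj j hj)) (zok_conv HV HWV Hk).
  rewrite /ev_I_ok Key Hout /= => -[Hx [nz HT]]; split=> //.
  exact: zsub_conv HV HWV Hk Hx.
- by move=> Hall; rewrite Hout; apply: H2 => k; exact: conv (Hall k).
Qed.

Lemma odd_case {F : countFieldType} (A : (nat -> vec F) -> Prop)
    (V W : vec F -> Prop) (v : seq (vec F)) (T : seq (vec F) -> Prop) n0 :
  is_block_subspace V -> Defs.subset (Defs.tail W n0) V ->
  (exists s, od_wins V T v A s) -> exists s, od_wins W T v A s.
Proof.
move=> HV HWV [[a f] Hs].
pose sh := @shrink F n0.+1.
exists (maxn a n0, fun hist yZ => let p := f (map (fun q => (q.1, sh q.2)) hist) (yZ.1, sh yZ.2) in (p.1, maxn p.2 n0)).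
move=> ys Zs.
set s' := (maxn a n0, _).
pose Zs' := fun j => sh (Zs j).
have Key : forall k, od_Imove s' ys Zs k =
   ((od_Imove (a, f) ys Zs' k).1, maxn (od_Imove (a, f) ys Zs' k).2 n0).
  by move=> k; rewrite /od_Imove /s' /= /mkseq -map_comp.
have Keyn : forall k, od_n s' ys Zs k = maxn (od_n (a, f) ys Zs' k) n0.
  by case=> [|k] //; rewrite /od_n Key.
have Hout : od_out s' ys Zs = od_out (a, f) ys Zs'.
  by apply: functional_extensionality => i; rewrite /od_out Key.
have conv : forall j, od_II_ok W T v s' ys Zs j -> od_II_ok V T v (a, f) ys Zs' j.
  move=> j [Ht [HT HZ]]; split; first by rewrite Keyn in Ht; exact: tail_max HWV Ht.
  by split; [rewrite -Hout | exact: zok_conv HV HWV HZ].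
have [H1 H2] := Hs ys Zs'.
split.
- move=> k Hj.
  have := H1 k (fun j hj => conv j (Hj j hj)).
  rewrite /od_I_ok Key Hout /= => -[Hx [nz HT]]; split=> //.
  by have [_ [_ HZ]] := Hj k (leqnn k); exact: zsub_conv HV HWV HZ Hx.
- by move=> Hall; rewrite Hout; apply: H2 => k; exact: conv (Hall k).
Qed.

Theorem mainTheorem4 (F : countFieldType) (A : (nat -> vec F) -> Prop)
    (V W : vec F -> Prop) (v : seq (vec F)) (T : seq (vec F) -> Prop) :
  is_block_subspace V -> is_block_subspace W -> almost_sub W V ->
  is_rule V v T ->
  I_has_strategy V T v A -> I_has_strategy W T v A.
Proof.
move=> HV _ [n0 HWV] _; rewrite /I_has_strategy; case: ifP => _.
- exact: odd_case HV HWV.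
- exact: even_case HV HWV.
Qed.
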